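(* Let $\gamma>0$, $N\in\mathbb{N}$, and $b_{-N},\dots,b_N\in\mathbb{C}$. Let $D=[d_{i,j}]_{i,j\ge0}$ be a compact operator on $\ell^2(\mathbb{Z}_+)$ (matrix in the standard basis) such that $d_{i,j}=0$ whenever $|i-j|>N$, and $$d_{m,m+j}=\frac{b_j}{(\log m)^{\gamma}}(1+o(1)),\qquad m\to+\infty,\ j=-N,\dots,N.$$ Let $\varphi_{1,b}(e^{i\theta})=\sum_{j=-N}^N b_je^{ij\theta}$. Then $$\lim_{n\to+\infty}(\log n)^{\gamma}s_n(D)=\|\varphi_{1,b}\|_{L^\infty(\mathbb{T})}.$$
   Context: $s_n(D)$, $n\ge1$, are the singular values of $D$ in non-increasing order with multiplicity. *)

(* Defs.v *)
From Stdlib Require Import Reals ZArith.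
From Coquelicot Require Import Coquelicot.
Open Scope R_scope.

Definition l2 (x : nat -> C) : Prop := ex_series (fun i => (Cmod (x i)) ^ 2).

Definition l2norm (x : nat -> C) : R := sqrt (Series (fun i => (Cmod (x i)) ^ 2)).

Definition vsub (x y : nat -> C) : nat -> C := fun i => Cminus (x i) (y i).

Definition ip (x y : nat -> C) : C :=
  (Series (fun i => Re (Cmult (x i) (Cconj (y i)))),
   Series (fun i => Im (Cmult (x i) (Cconj (y i))))).

Fixpoint csum (f : nat -> C) (r : nat) : C :=
  match r with
  | O => RtoC 0
  | S r' => Cplus (csum f r') (f r')
  end.

(* Action of a matrix d = [d_{i,j}] with d_{i,j} = 0 for |i-j| > N:
   (D x)_i = sum_{j <= i + N} d_{i,j} x_j  (all other terms vanish). *)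
Definition band_apply (N : nat) (d : nat -> nat -> C) (x : nat -> C) : nat -> C :=
  fun i => csum (fun j => Cmult (d i j) (x j)) (i + N + 1).

Definition bounded_op (T : (nat -> C) -> (nat -> C)) : Prop :=
  exists M : R, forall x, l2 x -> l2 (T x) /\ l2norm (T x) <= M * l2norm x.

Definition compact_op (T : (nat -> C) -> (nat -> C)) : Prop :=
  bounded_op T /\
  forall (xs : nat -> (nat -> C)) (B : R),
    (forall k, l2 (xs k) /\ l2norm (xs k) <= B) ->
    exists (phi : nat -> nat) (y : nat -> C),
      (forall k, (phi k < phi (S k))%nat) /\ l2 y /\
      is_lim_seq (fun k => l2norm (vsub (T (xs (phi k))) y)) 0.

Definition fin_rank_apply (r : nat) (u v : nat -> (nat -> C)) (x : nat -> C) : nat -> C :=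
  fun i => csum (fun k => Cmult (ip x (u k)) (v k i)) r.

(* n-th singular value (n >= 1), via the approximation-number formula
   s_n(T) = inf { ||T - K|| : rank K <= n - 1 }. *)
Definition sing_val (T : (nat -> C) -> (nat -> C)) (n : nat) : R :=
  real (Glb_Rbar (fun M : R => 0 <= M /\
    exists u v : nat -> (nat -> C),
      (forall k, (k < n - 1)%nat -> l2 (u k) /\ l2 (v k)) /\
      forall x, l2 x ->
        l2 (vsub (T x) (fin_rank_apply (n - 1) u v x)) /\
        l2norm (vsub (T x) (fin_rank_apply (n - 1) u v x)) <= M * l2norm x)).

Definition cexpi (t : R) : C := (cos t, sin t).

Definition symbol (N : nat) (b : Z -> C) (theta : R) : C :=
  csum (fun k => let j := (Z.of_nat k - Z.of_nat N)%Z in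
                 Cmult (b j) (cexpi (IZR j * theta))) (2 * N + 1).

(* L^infty(T) norm of the (continuous) symbol: sup over theta of |phi| *)
Definition symbol_sup_norm (N : nat) (b : Z -> C) : R :=
  real (Lub_Rbar (fun r : R => exists theta : R, r = Cmod (symbol N b theta))).

(* Main.v *)
Require Import Defs.
From Stdlib Require Import Reals ZArith Lia Lra Classical.
From Coquelicot Require Import Coquelicot.
Open Scope R_scope.


Fixpoint rsum (f : nat -> R) (n : nat) : R :=
  match n with O => 0 | S n' => rsum f n' + f n' end.

Lemma rsum_ext f g n : (forall i, (i < n)%nat -> f i = g i) -> rsum f n = rsum g n.
Proof. induction n; simpl; intros H; auto. rewrite IHn by (intros; apply H; lia). rewrite H by lia. auto. Qed.

Lemma rsum_le f g n : (forall i, (i < n)%nat -> f i <= g i) -> rsum f n <= rsum g n.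
Proof. induction n; simpl; intros H; [lra|]. pose proof (IHn (fun i Hi => H i ltac:(lia))). pose proof (H n ltac:(lia)). lra. Qed.

Lemma rsum_nonneg f n : (forall i, (i < n)%nat -> 0 <= f i) -> 0 <= rsum f n.
Proof. intros H. replace 0 with (rsum (fun _ => 0) n). apply rsum_le; auto. induction n; simpl; auto; rewrite IHn; [lra|intros; apply H; lia]. Qed.

Lemma rsum_plus f g n : rsum (fun i => f i + g i) n = rsum f n + rsum g n.
Proof. induction n; simpl; [lra|]. rewrite IHn; lra. Qed.

Lemma rsum_scal c f n : rsum (fun i => c * f i) n = c * rsum f n.
Proof. induction n; simpl; [lra|]. rewrite IHn; lra. Qed.

Lemma rsum_const c n : rsum (fun _ => c) n = INR n * c.
Proof. induction n; simpl rsum; [simpl; lra|]. rewrite IHn, S_INR; lra. Qed.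

Lemma rsum_add f a b : rsum f (a + b) = rsum f a + rsum (fun i => f (a + i)%nat) b.
Proof. induction b; simpl. rewrite Nat.add_0_r; lra. rewrite Nat.add_succ_r. simpl. rewrite IHb; lra. Qed.

Lemma rsum_mono f a b : (forall i, 0 <= f i) -> (a <= b)%nat -> rsum f a <= rsum f b.
Proof. intros H Hab. replace b with (a + (b - a))%nat by lia. rewrite rsum_add.
  pose proof (rsum_nonneg (fun i => f (a + i)%nat) (b - a) (fun i _ => H _)). lra. Qed.

Lemma rsum_swap (f : nat -> nat -> R) n m :
  rsum (fun i => rsum (fun j => f i j) m) n = rsum (fun j => rsum (fun i => f i j) n) m.
Proof. induction n; simpl. induction m; simpl; lra.
  rewrite IHn, <- rsum_plus. auto. Qed.

Lemma rsum_sum_n f n : rsum f (S n) = sum_n f n.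
Proof. induction n. simpl. rewrite sum_O. lra. rewrite sum_Sn. simpl rsum in *. rewrite <- IHn. simpl. auto. Qed.

Lemma csum_ext f g n : (forall i, (i < n)%nat -> f i = g i) -> csum f n = csum g n.
Proof. induction n; simpl; intros H; auto. rewrite IHn by (intros; apply H; lia). rewrite H by lia. auto. Qed.

Lemma csum_plus f g n : csum (fun i => Cplus (f i) (g i)) n = Cplus (csum f n) (csum g n).
Proof. induction n; simpl. apply injective_projections; simpl; lra. rewrite IHn; ring. Qed.

Lemma csum_scal_l c f n : csum (fun i => Cmult c (f i)) n = Cmult c (csum f n).
Proof. induction n; simpl. apply injective_projections; simpl; lra. rewrite IHn; ring. Qed.

Lemma csum_scal_r c f n : csum (fun i => Cmult (f i) c) n = Cmult (csum f n) c.
Proof. induction n; simpl. apply injective_projections; simpl; lra. rewrite IHn; ring. Qed.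

Lemma csum_zero f n : (forall i, (i < n)%nat -> f i = RtoC 0) -> csum f n = RtoC 0.
Proof. induction n; simpl; intros H; auto. rewrite IHn by (intros; apply H; lia). rewrite H by lia. ring. Qed.

Lemma csum_add f a b : csum f (a + b) = Cplus (csum f a) (csum (fun i => f (a + i)%nat) b).
Proof. induction b; simpl. rewrite Nat.add_0_r. ring. rewrite Nat.add_succ_r. simpl. rewrite IHb; ring. Qed.

Lemma csum_swap (f : nat -> nat -> C) n m :
  csum (fun i => csum (fun j => f i j) m) n = csum (fun j => csum (fun i => f i j) n) m.
Proof. induction n; simpl. symmetry; apply csum_zero; auto.
  rewrite IHn, <- csum_plus. auto. Qed.

Lemma csum_delta f n i : (i < n)%nat ->
  csum (fun k => if Nat.eq_dec k i then f k else RtoC 0) n = f i.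
Proof. induction n; intros Hi; [lia|]. simpl. destruct (Nat.eq_dec n i).
  subst. rewrite csum_zero. ring. intros k Hk. destruct (Nat.eq_dec k i); [lia|auto].
  rewrite IHn by lia. ring. Qed.

Lemma csum_Re f n : Re (csum f n) = rsum (fun i => Re (f i)) n.
Proof. induction n; simpl; auto. rewrite <- IHn. auto. Qed.

Lemma csum_Im f n : Im (csum f n) = rsum (fun i => Im (f i)) n.
Proof. induction n; simpl; auto. rewrite <- IHn. auto. Qed.

Lemma Cmod_csum f n : Cmod (csum f n) <= rsum (fun i => Cmod (f i)) n.
Proof. induction n; simpl. rewrite Cmod_0; lra. eapply Rle_trans. apply Cmod_triangle. lra. Qed.

Lemma csum_conj f n : Cconj (csum f n) = csum (fun i => Cconj (f i)) n.
Proof. induction n; simpl. apply injective_projections; simpl; lra. rewrite Cplus_conj, IHn; auto. Qed.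

Lemma RtoC_rsum f n : RtoC (rsum f n) = csum (fun i => RtoC (f i)) n.
Proof. induction n; simpl; auto. rewrite <- IHn. apply injective_projections; simpl; lra. Qed.

Lemma ser_fin f R0 : (forall i, (R0 <= i)%nat -> f i = 0) -> is_series f (rsum f R0).
Proof. intros H. unfold is_series. 
  apply (filterlim_ext_loc (fun _ => rsum f R0)).
  exists R0. intros n Hn. rewrite <- rsum_sum_n. replace (S n) with (R0 + (S n - R0))%nat by lia.
  rewrite rsum_add. rewrite (rsum_ext (fun i => f (R0 + i)%nat) (fun _ => 0)). rewrite rsum_const, Rmult_0_r. symmetry; apply Rplus_0_r.
  intros; apply H; lia.
  apply filterlim_const. Qed.

Lemma ser_fin_Series f R0 : (forall i, (R0 <= i)%nat -> f i = 0) -> ex_series f /\ Series f = rsum f R0.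
Proof. intros H. split. eexists; apply ser_fin; eauto. apply is_series_unique, ser_fin; auto. Qed.

Lemma ser_ge f R0 : (forall i, 0 <= f i) -> ex_series f -> rsum f R0 <= Series f.
Proof. intros H [l Hl]. rewrite (is_series_unique _ _ Hl).
  assert (Hlim : is_lim_seq (sum_n f) l) by exact Hl.
  assert (Hc := is_lim_seq_const (rsum f R0)).
  refine (is_lim_seq_le_loc _ _ _ _ _ Hc Hlim).
  exists R0. intros n Hn. rewrite <- rsum_sum_n. apply rsum_mono; auto; lia. Qed.

Lemma ser_bound f B : (forall i, 0 <= f i) -> (forall R0, rsum f R0 <= B) ->
  ex_series f /\ Series f <= B.
Proof. intros H HB.
  assert (E : ex_finite_lim_seq (sum_n f)).
  { apply (ex_finite_lim_seq_incr _ B). intros n. rewrite <- !rsum_sum_n. simpl. specialize (H (S n)). simpl in H. lra.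
    intros n. rewrite <- rsum_sum_n. auto. }
  destruct E as [l Hl]. split. exists l. exact Hl.
  unfold Series. rewrite (is_lim_seq_unique _ _ Hl). simpl.
  assert (Hc := is_lim_seq_const B).
  assert (X := is_lim_seq_le _ _ _ _ (fun n => eq_ind _ (fun z => z <= B) (HB (S n)) _ (rsum_sum_n f n)) Hl Hc). simpl in X. auto. Qed.

Lemma ser_nonneg f : (forall i, 0 <= f i) -> 0 <= Series f.
Proof. intros H. destruct (ex_series_dec f) as [E|E].
  eapply Rle_trans. 2: apply (ser_ge f 0); auto. simpl; lra.
  unfold Series. destruct (Lim_seq (sum_n f)) eqn:Q; simpl; try lra.
  exfalso. apply E. exists r. unfold is_series. 
  assert (ex_lim_seq (sum_n f)). apply ex_lim_seq_incr. intros n. rewrite sum_Sn. specialize (H (S n)). unfold plus; simpl. lra.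
  apply Lim_seq_correct in H0. rewrite Q in H0. exact H0. Qed.


Lemma Ceq (a b : C) : Re a = Re b -> Im a = Im b -> a = b.
Proof. intros; apply injective_projections; auto. Qed.

Lemma e_add a b : Cmult (cexpi a) (cexpi b) = cexpi (a + b).
Proof. unfold cexpi; apply Ceq; simpl; rewrite ?cos_plus, ?sin_plus; lra. Qed.

Lemma e_conj a : Cconj (cexpi a) = cexpi (- a).
Proof. unfold cexpi; apply Ceq; simpl; rewrite ?cos_neg, ?sin_neg; lra. Qed.

Lemma Cmod_e a : Cmod (cexpi a) = 1.
Proof. unfold cexpi, Cmod; simpl fst; simpl snd. pose proof (sin2_cos2 a) as H. unfold Rsqr in H.
  assert (E : cos a ^ 2 + sin a ^ 2 = 1) by (simpl; nra). rewrite E, sqrt_1; auto. Qed.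

Lemma e_0 : cexpi 0 = RtoC 1.
Proof. unfold cexpi; apply Ceq; simpl; rewrite ?cos_0, ?sin_0; lra. Qed.

Lemma e_period x k : cexpi (x + 2 * INR k * PI) = cexpi x.
Proof. unfold cexpi; rewrite cos_period, sin_period; auto. Qed.

Lemma e_period' x k : cexpi (x - 2 * INR k * PI) = cexpi x.
Proof. rewrite <- (e_period (x - 2 * INR k * PI) k). f_equal; ring. Qed.

Lemma geom_e a Q : Cmult (Cminus (cexpi a) (RtoC 1)) (csum (fun t => cexpi (INR t * a)) Q)
   = Cminus (cexpi (INR Q * a)) (RtoC 1).
Proof. induction Q; simpl csum. simpl INR. rewrite Rmult_0_l, e_0. apply Ceq; simpl; lra.
  rewrite Cmult_plus_distr_l, IHQ. rewrite S_INR.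
  replace ((INR Q + 1) * a) with (a + INR Q * a) by ring. rewrite <- e_add. ring. Qed.

Lemma cos_ne1 x : 0 < x < 2 * PI -> cos x <> 1.
Proof. intros Hx. replace x with (2 * (x / 2)) by field. rewrite cos_2a_sin.
  assert (0 < sin (x/2)) by (apply sin_gt_0; lra). nra. Qed.

Lemma orth Q k k' : (k < Q)%nat -> (k' < Q)%nat -> k <> k' ->
  csum (fun t => cexpi (INR t * ((INR k' - INR k) * (2 * PI / INR Q)))) Q = RtoC 0.
Proof. intros Hk Hk' Hne.
  assert (HQ : 0 < INR Q) by (apply lt_0_INR; lia).
  set (a := (INR k' - INR k) * (2 * PI / INR Q)).
  assert (E1 : cexpi (INR Q * a) = RtoC 1).
  { unfold a. destruct (Nat.lt_ge_cases k k').
    - replace (INR Q * ((INR k' - INR k) * (2 * PI / INR Q))) with (0 + 2 * INR (k' - k) * PI).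
      rewrite e_period, e_0; auto. rewrite minus_INR by lia. field. lra.
    - replace (INR Q * ((INR k' - INR k) * (2 * PI / INR Q))) with (0 - 2 * INR (k - k') * PI).
      rewrite e_period', e_0; auto. rewrite minus_INR by lia. field. lra. }
  assert (E2 : cexpi a <> RtoC 1).
  { intros E. assert (Hc : cos a = 1) by (unfold cexpi in E; injection E; auto).
    assert (HPI := PI_RGT_0).
    destruct (Nat.lt_ge_cases k k').
    - apply (cos_ne1 a); auto. unfold a. assert (INR k < INR k') by (apply lt_INR; auto).
      assert (INR k' - INR k < INR Q). { assert (INR k' < INR Q) by (apply lt_INR; auto). pose proof (pos_INR k). lra. }
      split. apply Rmult_lt_0_compat. lra. apply Rdiv_lt_0_compat; lra.
      replace (2 * PI) with (INR Q * (2 * PI / INR Q)) at 2 by (field; lra).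
      apply Rmult_lt_compat_r. apply Rdiv_lt_0_compat; lra. lra.
    - apply (cos_ne1 (-a)); [|rewrite cos_neg; auto]. unfold a. assert (INR k' < INR k) by (apply lt_INR; lia).
      assert (INR k - INR k' < INR Q). { assert (INR k < INR Q) by (apply lt_INR; auto). pose proof (pos_INR k'). lra. }
      replace (- ((INR k' - INR k) * (2 * PI / INR Q))) with ((INR k - INR k') * (2 * PI / INR Q)) by ring.
      split. apply Rmult_lt_0_compat. lra. apply Rdiv_lt_0_compat; lra.
      replace (2 * PI) with (INR Q * (2 * PI / INR Q)) at 2 by (field; lra).
      apply Rmult_lt_compat_r. apply Rdiv_lt_0_compat; lra. lra. }
  pose proof (geom_e a Q) as G. rewrite E1 in G.
  assert (Hnz : Cminus (cexpi a) (RtoC 1) <> RtoC 0).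
  { intros X. apply E2. replace (cexpi a) with (Cplus (Cminus (cexpi a) (RtoC 1)) (RtoC 1)) by ring. rewrite X. ring. }
  replace (csum (fun t => cexpi (INR t * a)) Q) with
    (Cdiv (Cmult (Cminus (cexpi a) (RtoC 1)) (csum (fun t => cexpi (INR t * a)) Q)) (Cminus (cexpi a) (RtoC 1))).
  rewrite G. unfold Cdiv. replace (Cminus (RtoC 1) (RtoC 1)) with (RtoC 0) by ring. ring.
  field. auto. Qed.

Lemma csum_mult f g n m : Cmult (csum f n) (csum g m) = csum (fun i => csum (fun j => Cmult (f i) (g j)) m) n.
Proof. rewrite <- csum_scal_r. apply csum_ext. intros. rewrite csum_scal_l. auto. Qed.

Lemma orth' Q k k' : (k < Q)%nat -> (k' < Q)%nat ->
  csum (fun t => cexpi (INR t * ((INR k' - INR k) * (2 * PI / INR Q)))) Q =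
  if Nat.eq_dec k' k then RtoC (INR Q) else RtoC 0.
Proof. intros. destruct (Nat.eq_dec k' k). subst. rewrite (csum_ext _ (fun _ => RtoC 1)).
  clear. induction Q. simpl; auto. simpl csum. rewrite IHQ. rewrite S_INR. apply Ceq; simpl; lra.
  intros. replace (INR i * ((INR k - INR k) * (2 * PI / INR Q))) with 0 by ring. apply e_0.
  apply orth; auto. Qed.

Definition cQ (Q : nat) := 2 * PI / INR Q.
Definition DFT (z : nat -> C) (Q t : nat) : C :=
  csum (fun k => Cmult (z k) (cexpi (- (INR k * (INR t * cQ Q))))) Q.

Lemma RtoC_Cmod2 w : RtoC (Cmod w ^ 2) = Cmult w (Cconj w).
Proof. rewrite Cmod2_conj. auto. Qed.

Lemma RtoC_inj x y : RtoC x = RtoC y -> x = y.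
Proof. intros H. injection H; auto. Qed.

Lemma parseval z Q : rsum (fun t => Cmod (DFT z Q t) ^ 2) Q = INR Q * rsum (fun k => Cmod (z k) ^ 2) Q.
Proof. apply RtoC_inj. rewrite RtoC_rsum.
  rewrite (csum_ext _ (fun t => csum (fun k => csum (fun k' =>
      Cmult (Cmult (z k) (Cconj (z k'))) (cexpi (INR t * ((INR k' - INR k) * cQ Q)))) Q) Q)).
  2:{ intros t _. rewrite RtoC_Cmod2. unfold DFT. rewrite csum_conj, csum_mult.
      apply csum_ext; intros k _; apply csum_ext; intros k' _.
      rewrite Cmult_conj, e_conj, Ropp_involutive.
      replace (Cmult (Cmult (z k) (cexpi (- (INR k * (INR t * cQ Q))))) (Cmult (Cconj (z k')) (cexpi (INR k' * (INR t * cQ Q)))))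
        with (Cmult (Cmult (z k) (Cconj (z k'))) (Cmult (cexpi (- (INR k * (INR t * cQ Q)))) (cexpi (INR k' * (INR t * cQ Q))))) by ring.
      rewrite e_add. f_equal. f_equal. ring. }
  rewrite csum_swap.
  rewrite (csum_ext _ (fun k => Cmult (Cmult (z k) (Cconj (z k))) (RtoC (INR Q)))).
  2:{ intros k Hk. rewrite csum_swap.
      rewrite (csum_ext _ (fun k' => if Nat.eq_dec k' k then Cmult (Cmult (z k) (Cconj (z k'))) (RtoC (INR Q)) else RtoC 0)).
      apply (csum_delta (fun k' => Cmult (Cmult (z k) (Cconj (z k'))) (RtoC (INR Q)))); auto.
      intros k' Hk'. rewrite csum_scal_l. unfold cQ. rewrite orth' by auto.
      destruct (Nat.eq_dec k' k); auto. ring. }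
  rewrite csum_scal_r. rewrite RtoC_mult, RtoC_rsum.
  rewrite (csum_ext (fun i => RtoC (Cmod (z i) ^ 2)) (fun k => Cmult (z k) (Cconj (z k)))).
  2: intros; apply RtoC_Cmod2.
  ring. Qed.

Lemma shift1 h Q : (0 < Q)%nat -> csum (fun i => h ((i + 1) mod Q)%nat) Q = csum h Q.
Proof. intros HQ. destruct Q as [|Q']; [lia|].
  transitivity (Cplus (csum (fun i => h ((i+1) mod S Q')%nat) Q') (h ((Q'+1) mod S Q')%nat)); [reflexivity|].
  replace ((Q' + 1) mod S Q')%nat with 0%nat by (rewrite Nat.add_1_r, Nat.Div0.mod_same; auto).
  rewrite (csum_ext _ (fun i => h (1 + i)%nat)).
  2:{ intros i Hi. rewrite Nat.mod_small by lia. f_equal. lia. }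
  replace (S Q') with (1 + Q')%nat by lia. rewrite csum_add. simpl. ring. Qed.

Lemma shift_inv g Q q : (0 < Q)%nat -> csum (fun i => g ((i + q) mod Q)%nat) Q = csum g Q.
Proof. intros HQ. induction q.
  - apply csum_ext. intros. rewrite Nat.add_0_r, Nat.mod_small; auto.
  - rewrite <- IHq. rewrite <- (shift1 (fun j => g ((j + q) mod Q)%nat)) by auto.
    apply csum_ext. intros i _. f_equal.
    rewrite Nat.Div0.add_mod_idemp_l. f_equal. lia. Qed.

Definition circ (beta : nat -> C) (K Q : nat) (z : nat -> C) (i : nat) : C :=
  csum (fun q => Cmult (beta q) (z ((i + q) mod Q)%nat)) K.
Definition psi (beta : nat -> C) (K : nat) (th : R) : C :=
  csum (fun q => Cmult (beta q) (cexpi (INR q * th))) K.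

Lemma dft_circ beta K Q z t : (0 < Q)%nat ->
  DFT (circ beta K Q z) Q t = Cmult (psi beta K (INR t * cQ Q)) (DFT z Q t).
Proof. intros HQ. unfold DFT, circ, psi.
  assert (HQr : 0 < INR Q) by (apply lt_0_INR; lia).
  rewrite (csum_ext _ (fun i => csum (fun q =>
     Cmult (Cmult (beta q) (cexpi (INR q * (INR t * cQ Q))))
       (Cmult (z ((i + q) mod Q)%nat) (cexpi (- (INR ((i + q) mod Q)%nat * (INR t * cQ Q)))))) K)).
  2:{ intros i _. rewrite <- csum_scal_r. apply csum_ext. intros q _.
      set (r := ((i + q) mod Q)%nat). set (m := ((i + q) / Q)%nat).
      assert (Hd : (i + q = Q * m + r)%nat) by (apply Nat.div_mod; lia).
      assert (E : cexpi (- (INR i * (INR t * cQ Q))) =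
                  Cmult (cexpi (INR q * (INR t * cQ Q))) (cexpi (- (INR r * (INR t * cQ Q))))).
      { rewrite e_add. rewrite <- (e_period (- (INR i * (INR t * cQ Q))) (m * t)). f_equal.
        assert (Hr : INR i + INR q = INR Q * INR m + INR r) by (rewrite <- plus_INR, <- mult_INR, <- plus_INR; f_equal; auto).
        unfold cQ. rewrite mult_INR.
        replace (INR r) with (INR i + INR q - INR Q * INR m) by lra. field. lra. }
      rewrite E. ring. }
  rewrite csum_swap. rewrite <- csum_scal_r. apply csum_ext. intros q _.
  rewrite csum_scal_l. f_equal.
  apply (shift_inv (fun k => Cmult (z k) (cexpi (- (INR k * (INR t * cQ Q)))))); auto. Qed.

Lemma circ_bound beta K Q z Phi : (0 < Q)%nat -> (forall th, Cmod (psi beta K th) <= Phi) ->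
  rsum (fun i => Cmod (circ beta K Q z i) ^ 2) Q <= Phi ^ 2 * rsum (fun k => Cmod (z k) ^ 2) Q.
Proof. intros HQ Hb. assert (HQr : 0 < INR Q) by (apply lt_0_INR; lia).
  apply (Rmult_le_reg_l (INR Q)); auto.
  rewrite <- parseval.
  rewrite (rsum_ext _ (fun t => Cmod (psi beta K (INR t * cQ Q)) ^ 2 * Cmod (DFT z Q t) ^ 2)).
  2:{ intros t _. rewrite dft_circ by auto. rewrite Cmod_mult. ring. }
  replace (INR Q * (Phi ^ 2 * rsum (fun k => Cmod (z k) ^ 2) Q)) with (Phi ^ 2 * (INR Q * rsum (fun k => Cmod (z k) ^ 2) Q)) by ring.
  rewrite <- parseval, <- rsum_scal. apply rsum_le. intros t _.
  apply Rmult_le_compat_r. apply pow2_ge_0.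
  pose proof (Hb (INR t * cQ Q)). pose proof (Cmod_ge_0 (psi beta K (INR t * cQ Q))). simpl. nra. Qed.


Lemma kernel n : forall m (A : nat -> nat -> C), (m < n)%nat ->
  exists v : nat -> C, (exists l, (l < n)%nat /\ v l <> RtoC 0) /\
    forall k, (k < m)%nat -> csum (fun l => Cmult (A k l) (v l)) n = RtoC 0.
Proof. induction n as [|n' IH]; intros m A Hmn; [lia|].
  destruct (classic (exists k0, (k0 < m)%nat /\ A k0 n' <> RtoC 0)) as [[k0 [Hk0 Hp]]|Hno].
  - set (p := A k0 n').
    set (sk := fun k' => if (k' <? k0)%nat then k' else S k').
    set (B := fun k' l => Cminus (Cmult (A (sk k') l) p) (Cmult (A k0 l) (A (sk k') n'))).
    destruct (IH (m - 1)%nat B ltac:(lia)) as [w [[l [Hl Hwl]] Hw]].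
    set (S0 := csum (fun l => Cmult (A k0 l) (w l)) n').
    exists (fun l => if (l <? n')%nat then w l else Copp (Cdiv S0 p)).
    split. exists l. split. lia. replace (l <? n')%nat with true by (symmetry; apply Nat.ltb_lt; lia). auto.
    intros k Hk. simpl csum. replace (n' <? n')%nat with false by (symmetry; apply Nat.ltb_ge; lia).
    rewrite (csum_ext _ (fun l => Cmult (A k l) (w l))).
    2:{ intros i Hi. replace (i <? n')%nat with true by (symmetry; apply Nat.ltb_lt; lia). auto. }
    destruct (Nat.eq_dec k k0) as [->|Hne].
    + fold S0. fold p. field. auto.
    + set (k' := if (k <? k0)%nat then k else (k - 1)%nat).
      assert (Hsk : sk k' = k).
      { unfold sk, k'. destruct (k <? k0)%nat eqn:E. rewrite E; auto.
        apply Nat.ltb_ge in E. destruct (k - 1 <? k0)%nat eqn:E2. apply Nat.ltb_lt in E2. lia. lia. }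
      assert (Hk' : (k' < m - 1)%nat). { unfold k'. destruct (k <? k0)%nat eqn:E. apply Nat.ltb_lt in E; lia. apply Nat.ltb_ge in E; lia. }
      specialize (Hw k' Hk'). unfold B in Hw. rewrite Hsk in Hw.
      rewrite (csum_ext _ (fun l => Cminus (Cmult p (Cmult (A k l) (w l))) (Cmult (A k n') (Cmult (A k0 l) (w l))))) in Hw.
      2:{ intros; ring. }
      unfold Cminus in Hw. rewrite csum_plus in Hw.
      rewrite (csum_ext (fun l => Copp _) (fun l => Cmult (Copp (A k n')) (Cmult (A k0 l) (w l)))) in Hw by (intros; ring).
      rewrite !csum_scal_l in Hw. fold S0 in Hw.
      set (Sk := csum (fun l => Cmult (A k l) (w l)) n') in *.
      assert (E : Sk = Cdiv (Cmult (A k n') S0) p).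
      { replace Sk with (Cdiv (Cplus (Cplus (Cmult p Sk) (Cmult (Copp (A k n')) S0)) (Cmult (A k n') S0)) p) by (field; auto).
        rewrite Hw. field. auto. }
      rewrite E. field. auto.
  - exists (fun l => if Nat.eq_dec l n' then RtoC 1 else RtoC 0). split.
    exists n'. split. lia. destruct (Nat.eq_dec n' n'); [|lia]. intros X. injection X. lra.
    intros k Hk. simpl csum. rewrite csum_zero. destruct (Nat.eq_dec n' n'); [|lia].
    assert (A k n' = RtoC 0). { apply NNPP. intros X. apply Hno. exists k. auto. }
    rewrite H. ring.
    intros i Hi. destruct (Nat.eq_dec i n'); [lia|]. ring. Qed.


Lemma glb_le (S : R -> Prop) M0 : (forall M, S M -> 0 <= M) -> S M0 ->
  0 <= real (Glb_Rbar S) <= M0.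
Proof. intros H0 HM. destruct (Glb_Rbar_correct S) as [Hlb Hg].
  assert (A1 : Rbar_le (Glb_Rbar S) M0) by (apply Hlb; auto).
  assert (A2 : Rbar_le 0 (Glb_Rbar S)) by (apply Hg; intros x Hx; simpl; apply H0; auto).
  destruct (Glb_Rbar S); simpl in *; try contradiction; lra. Qed.

Lemma glb_ge (S : R -> Prop) M0 c : S M0 -> (forall M, S M -> c <= M) -> c <= real (Glb_Rbar S).
Proof. intros HM H. destruct (Glb_Rbar_correct S) as [Hlb Hg].
  assert (A1 : Rbar_le (Glb_Rbar S) M0) by (apply Hlb; auto).
  assert (A2 : Rbar_le c (Glb_Rbar S)) by (apply Hg; intros x Hx; simpl; apply H; auto).
  destruct (Glb_Rbar S); simpl in *; try contradiction; lra. Qed.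

Lemma lub_facts (E : R -> Prop) B x0 : E x0 -> (forall r, E r -> r <= B) ->
  (forall r, E r -> r <= real (Lub_Rbar E)) /\
  (forall u, (forall r, E r -> r <= u) -> real (Lub_Rbar E) <= u).
Proof. intros Hx HB. destruct (Lub_Rbar_correct E) as [Hub Hl].
  assert (A1 : Rbar_le (Lub_Rbar E) B) by (apply Hl; intros r Hr; simpl; auto).
  assert (A2 : Rbar_le x0 (Lub_Rbar E)) by (apply Hub; auto).
  destruct (Lub_Rbar E) as [l| |] eqn:Q; simpl in *; try contradiction.
  split. intros r Hr. specialize (Hub r Hr). simpl in Hub. auto.
  intros u Hu. apply (Hl (Finite u)). intros r' Hr'; simpl; auto. Qed.

Lemma band_reindex N d x i : (forall i j : nat, (i + N < j)%nat \/ (j + N < i)%nat -> d i j = RtoC 0) ->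
  (N <= i)%nat ->
  band_apply N d x i = csum (fun q => Cmult (d i (i - N + q)%nat) (x (i - N + q)%nat)) (2 * N + 1).
Proof. intros Hb Hi. unfold band_apply. replace (i + N + 1)%nat with ((i - N) + (2 * N + 1))%nat by lia.
  rewrite csum_add. rewrite csum_zero. ring.
  intros j Hj. rewrite Hb by lia. ring. Qed.

Lemma ip_fin x u R0 : (forall i, (R0 <= i)%nat -> x i = RtoC 0) ->
  ip x u = csum (fun i => Cmult (x i) (Cconj (u i))) R0.
Proof. intros H. unfold ip. apply Ceq.
  - simpl. rewrite csum_Re. apply ser_fin_Series. intros i Hi. rewrite H by auto. simpl. ring.
  - simpl. rewrite csum_Im. apply ser_fin_Series. intros i Hi. rewrite H by auto. simpl. ring. Qed.

Lemma l2_fin x R0 : (forall i, (R0 <= i)%nat -> x i = RtoC 0) ->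
  l2 x /\ Series (fun i => Cmod (x i) ^ 2) = rsum (fun i => Cmod (x i) ^ 2) R0.
Proof. intros H. apply ser_fin_Series. intros i Hi. rewrite H by auto. rewrite Cmod_0. ring. Qed.

Lemma l2norm_le x y M : 0 <= M -> Series (fun i => Cmod (y i) ^ 2) <= M ^ 2 * Series (fun i => Cmod (x i) ^ 2) ->
  l2norm y <= M * l2norm x.
Proof. intros HM H. unfold l2norm. rewrite <- (sqrt_pow2 M) at 1 by auto. rewrite <- sqrt_mult.
  apply sqrt_le_1_alt. auto. apply pow2_ge_0. apply ser_nonneg. intros; apply pow2_ge_0. Qed.

Lemma Rpower_pos x g : 0 < Rpower x g.
Proof. unfold Rpower. apply exp_pos. Qed.


Definition beta (N : nat) (b : Z -> C) (q : nat) : C := b (Z.of_nat q - Z.of_nat N)%Z.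
Definition W (gamma : R) (m : nat) : R := / Rpower (ln (INR m)) gamma.

Lemma W_pos g m : 0 < W g m.
Proof. unfold W. apply Rinv_0_lt_compat, Rpower_pos. Qed.

Definition Hasym (gamma : R) (N : nat) (b : Z -> C) (d : nat -> nat -> C) : Prop :=
  forall j : Z, (- Z.of_nat N <= j <= Z.of_nat N)%Z ->
     exists eps : nat -> C,
       is_lim_seq (fun m => Cmod (eps m)) 0 /\
       exists m0 : nat, forall m : nat, (m0 <= m)%nat ->
         d m (Z.to_nat (Z.of_nat m + j)) =
         Cmult (Cdiv (b j) (RtoC (Rpower (ln (INR m)) gamma)))
               (Cplus (RtoC 1) (eps m)).

Lemma Hd_one gamma N b d : Hasym gamma N b d -> forall delta, 0 < delta -> forall q, (q <= 2 * N)%nat ->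
  exists M0, forall m, (M0 <= m)%nat ->
    Cmod (Cminus (d m (m - N + q)%nat) (Cmult (beta N b q) (RtoC (W gamma m)))) <= delta * W gamma m.
Proof. intros H delta Hdel q Hq.
  destruct (H (Z.of_nat q - Z.of_nat N)%Z ltac:(lia)) as [eps [Heps [m0 Hm0]]].
  set (bq := beta N b q).
  assert (Hb0 : 0 < Cmod bq + 1) by (pose proof (Cmod_ge_0 bq); lra).
  apply is_lim_seq_spec in Heps.
  destruct (Heps (mkposreal (delta / (Cmod bq + 1)) ltac:(apply Rdiv_lt_0_compat; lra))) as [M1 HM1].
  exists (Nat.max (Nat.max m0 M1) N). intros m Hm.
  specialize (HM1 m ltac:(lia)). simpl in HM1. rewrite Rminus_0_r, Rabs_pos_eq in HM1 by apply Cmod_ge_0.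
  specialize (Hm0 m ltac:(lia)).
  replace (Z.to_nat (Z.of_nat m + (Z.of_nat q - Z.of_nat N))) with (m - N + q)%nat in Hm0 by lia.
  rewrite Hm0. fold (beta N b q). fold bq.
  assert (Hw := Rpower_pos (ln (INR m)) gamma).
  replace (Cminus (Cmult (Cdiv bq (RtoC (Rpower (ln (INR m)) gamma))) (Cplus (RtoC 1) (eps m))) (Cmult bq (RtoC (W gamma m))))
    with (Cmult (Cmult bq (RtoC (W gamma m))) (eps m)).
  2:{ unfold W. rewrite RtoC_inv by lra. field. intros X. injection X. lra. }
  rewrite !Cmod_mult. rewrite Cmod_R, Rabs_pos_eq by (apply Rlt_le, W_pos).
  pose proof (W_pos gamma m). pose proof (Cmod_ge_0 bq). pose proof (Cmod_ge_0 (eps m)).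
  assert (Cmod bq * Cmod (eps m) <= delta).
  { apply Rle_trans with (Cmod bq * (delta / (Cmod bq + 1))). apply Rmult_le_compat_l; lra.
    apply Rle_trans with ((Cmod bq + 1) * (delta / (Cmod bq + 1))). apply Rmult_le_compat_r. apply Rlt_le, Rdiv_lt_0_compat; lra. lra.
    right. field. lra. }
  nra. Qed.

Lemma Hd_unif gamma N b d : Hasym gamma N b d -> forall delta, 0 < delta ->
  exists M0, forall m, (M0 <= m)%nat -> forall q, (q <= 2 * N)%nat ->
    Cmod (Cminus (d m (m - N + q)%nat) (Cmult (beta N b q) (RtoC (W gamma m)))) <= delta * W gamma m.
Proof. intros H delta Hdel.
  assert (G : forall Q, exists M0, forall m, (M0 <= m)%nat -> forall q, (q < Q)%nat -> (q <= 2 * N)%nat ->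
    Cmod (Cminus (d m (m - N + q)%nat) (Cmult (beta N b q) (RtoC (W gamma m)))) <= delta * W gamma m).
  { induction Q. exists 0%nat. intros; lia.
    destruct IHQ as [M1 HM1].
    destruct (le_lt_dec Q (2 * N)) as [HQ|HQ].
    - destruct (Hd_one gamma N b d H delta Hdel Q HQ) as [M2 HM2].
      exists (Nat.max M1 M2). intros m Hm q Hq Hq2. destruct (Nat.eq_dec q Q). subst. apply HM2; lia.
      apply HM1; auto; lia.
    - exists M1. intros m Hm q Hq Hq2. apply HM1; auto; lia. }
  destruct (G (S (2 * N))) as [M0 HM0]. exists M0. intros. apply HM0; auto; lia. Qed.

Lemma symbol_psi N b th : Cmod (symbol N b th) = Cmod (psi (beta N b) (2 * N + 1) th).
Proof. unfold symbol, psi.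
  rewrite (csum_ext _ (fun k => Cmult (Cmult (beta N b k) (cexpi (INR k * th))) (cexpi (- (INR N * th))))).
  rewrite csum_scal_r, Cmod_mult, Cmod_e. ring.
  intros k _. unfold beta. rewrite <- Cmult_assoc, e_add. f_equal. f_equal.
  rewrite minus_IZR, <- !INR_IZR_INZ. ring. Qed.

Lemma psi_bound beta K th : Cmod (psi beta K th) <= rsum (fun q => Cmod (beta q)) K.
Proof. unfold psi. eapply Rle_trans. apply Cmod_csum. apply rsum_le. intros. rewrite Cmod_mult, Cmod_e. lra. Qed.

Lemma Phi_facts N b :
  (forall th, Cmod (psi (beta N b) (2 * N + 1) th) <= symbol_sup_norm N b) /\
  (forall eps, 0 < eps -> exists th, symbol_sup_norm N b - eps < Cmod (psi (beta N b) (2 * N + 1) th)).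
Proof. set (E := fun r : R => exists theta : R, r = Cmod (symbol N b theta)).
  destruct (lub_facts E (rsum (fun q => Cmod (beta N b q)) (2 * N + 1)) (Cmod (symbol N b 0))) as [H1 H2].
  exists 0; auto. intros r [th ->]. rewrite symbol_psi. apply psi_bound.
  unfold symbol_sup_norm. fold E. split.
  - intros th. rewrite <- symbol_psi. apply H1. exists th; auto.
  - intros eps Heps. apply NNPP. intros X.
    assert (real (Lub_Rbar E) <= real (Lub_Rbar E) - eps).
    { apply H2. intros r [th ->]. rewrite symbol_psi. apply Rnot_lt_le. intros Y. apply X. exists th. auto. }
    lra. Qed.


Lemma W_mono g m i : 0 <= g -> (2 <= m)%nat -> (m <= i)%nat -> W g i <= W g m.
Proof. intros Hg Hm Hi. unfold W. apply Rinv_le_contravar. apply Rpower_pos.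
  apply Rle_Rpower_l; auto. split. rewrite <- ln_1. apply ln_increasing. lra.
  apply (lt_INR 1 m); lia. apply ln_le. apply (lt_INR 0 m); lia. apply le_INR; auto. Qed.

Lemma rsum_S f n : rsum f (S n) = rsum f n + f n.
Proof. reflexivity. Qed.

Lemma CS_sum a K : (rsum a K) ^ 2 <= INR K * rsum (fun q => a q ^ 2) K.
Proof. induction K. simpl. lra. rewrite !rsum_S. rewrite S_INR.
  set (Sm := rsum a K) in *. set (T := rsum (fun q => a q ^ 2) K) in *.
  assert (HT : 0 <= T) by (apply rsum_nonneg; intros; apply pow2_ge_0).
  set (k := INR K) in *. set (x := a K) in *. assert (Hk : 0 <= k) by apply pos_INR.
  assert (0 <= (Sm - k * x) ^ 2) by apply pow2_ge_0.
  destruct (Req_dec k 0) as [E|E].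
  - rewrite E in *. assert (Sm ^ 2 = 0) by (pose proof (pow2_ge_0 Sm); lra).
    assert (Sm = 0) by (apply NNPP; intros X; apply (pow_nonzero Sm 2 X); auto). rewrite H1. nra.
  - assert (0 < k) by lra.
    assert (k * (T + k * x ^ 2 - 2 * Sm * x) >= 0) by nra.
    assert (T + k * x ^ 2 - 2 * Sm * x >= 0).
    { destruct (Rle_lt_dec 0 (T + k * x ^ 2 - 2 * Sm * x)); [lra|]. nra. }
    nra. Qed.

Lemma sq_split (p q eta : R) : 0 < eta -> (p + q) ^ 2 <= (1 + eta) * p ^ 2 + (1 + / eta) * q ^ 2.
Proof. intros He. assert (0 <= (eta * p - q) ^ 2 / eta) by (apply Rdiv_le_0_compat; [apply pow2_ge_0|lra]).
  replace ((eta * p - q) ^ 2 / eta) with (eta * p ^ 2 - 2 * p * q + / eta * q ^ 2) in H by (field; lra). nra. Qed.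

Lemma Cmod_split a b eta : 0 < eta -> Cmod (Cplus a b) ^ 2 <= (1 + eta) * Cmod a ^ 2 + (1 + / eta) * Cmod b ^ 2.
Proof. intros He. eapply Rle_trans. 2: apply sq_split; auto.
  pose proof (Cmod_triangle a b). pose proof (Cmod_ge_0 (Cplus a b)). apply pow_incr. lra. Qed.

Lemma shiftsum h s R R' : (forall i, 0 <= h i) -> (R <= s + R')%nat ->
  rsum (fun i => if (i <? s)%nat then 0 else h (i - s)%nat) R <= rsum h R'.
Proof. intros H0 HR. eapply Rle_trans. apply rsum_mono; [|exact HR].
  intros i; destruct (i <? s)%nat; [lra|auto].
  rewrite rsum_add. rewrite (rsum_ext _ (fun _ => 0)). rewrite rsum_const.
  rewrite (rsum_ext _ h). lra.
  intros i _. replace (s + i <? s)%nat with false by (symmetry; apply Nat.ltb_ge; lia). f_equal. lia.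
  intros i Hi. replace (i <? s)%nat with true by (symmetry; apply Nat.ltb_lt; lia). auto. Qed.

Definition Hband (N : nat) (d : nat -> nat -> C) : Prop :=
  forall i j : nat, (i + N < j)%nat \/ (j + N < i)%nat -> d i j = RtoC 0.

Lemma core_UB gamma N b d Phi delta eta m x R :
  0 <= gamma -> Hband N d -> (forall th, Cmod (psi (beta N b) (2 * N + 1) th) <= Phi) ->
  0 < eta -> 0 <= delta -> (N <= m)%nat -> (2 <= m)%nat ->
  (forall i, (m <= i)%nat -> forall q, (q <= 2 * N)%nat ->
     Cmod (Cminus (d i (i - N + q)%nat) (Cmult (beta N b q) (RtoC (W gamma i)))) <= delta * W gamma i) ->
  rsum (fun i => if (i <? m)%nat then 0 else Cmod (band_apply N d x i) ^ 2) R <=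
   (W gamma m) ^ 2 * ((1 + eta) * Phi ^ 2 + (1 + / eta) * (INR (2 * N + 1)) ^ 2 * delta ^ 2)
     * rsum (fun k => Cmod (x k) ^ 2) (R + N).
Proof. intros Hg Hb HPhi Heta Hdel HNm H2m Hd.
  set (K := (2 * N + 1)%nat). set (Wm := W gamma m). set (X := rsum (fun k => Cmod (x k) ^ 2) (R + N)).
  set (T := fun i => csum (fun q => Cmult (beta N b q) (x (i - N + q)%nat)) K).
  set (e2 := fun i => rsum (fun q => Cmod (x (i - N + q)%nat) ^ 2) K).
  assert (HX : 0 <= X) by (apply rsum_nonneg; intros; apply pow2_ge_0).
  assert (HWm : 0 < Wm) by apply W_pos.
  assert (HPhi0 : 0 <= Phi) by (eapply Rle_trans; [apply Cmod_ge_0|apply (HPhi 0)]).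
  assert (S1 : forall i, (m <= i)%nat -> Cmod (band_apply N d x i) ^ 2 <=
     (1 + eta) * Wm ^ 2 * Cmod (T i) ^ 2 + (1 + / eta) * INR K * delta ^ 2 * Wm ^ 2 * e2 i).
  { intros i Hi. rewrite band_reindex by (auto; lia).
    set (Ee := csum (fun q => Cmult (Cminus (d i (i - N + q)%nat) (Cmult (beta N b q) (RtoC (W gamma i)))) (x (i - N + q)%nat)) K).
    replace (csum _ (2 * N + 1)) with (Cplus (Cmult (RtoC (W gamma i)) (T i)) Ee).
    2:{ unfold Ee, T. rewrite <- csum_scal_l, <- csum_plus. apply csum_ext. intros. fold K. ring. }
    eapply Rle_trans. apply (Cmod_split _ _ eta Heta).
    assert (HWi : 0 < W gamma i <= Wm) by (split; [apply W_pos|apply W_mono; auto]).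
    apply Rplus_le_compat.
    - rewrite Cmod_mult, Cmod_R, Rabs_pos_eq by lra. pose proof (Cmod_ge_0 (T i)).
      assert (W gamma i ^ 2 <= Wm ^ 2) by (apply pow_incr; lra).
      assert (0 <= Cmod (T i) ^ 2) by apply pow2_ge_0.
      apply Rle_trans with ((1+eta) * (Wm^2 * Cmod (T i)^2)); [apply Rmult_le_compat_l; [lra|]; rewrite Rpow_mult_distr; apply Rmult_le_compat_r; auto | right; ring].
    - assert (HE : Cmod Ee <= delta * Wm * rsum (fun q => Cmod (x (i - N + q)%nat)) K).
      { unfold Ee. eapply Rle_trans. apply Cmod_csum. rewrite <- rsum_scal. apply rsum_le. intros q Hq.
        rewrite Cmod_mult. apply Rmult_le_compat_r. apply Cmod_ge_0.
        eapply Rle_trans. apply Hd; auto. unfold K in Hq; lia. apply Rmult_le_compat_l; lra. }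
      assert (HE2 : Cmod Ee ^ 2 <= (delta * Wm) ^ 2 * (INR K * e2 i)).
      { eapply Rle_trans. apply pow_incr. split. apply Cmod_ge_0. exact HE.
        rewrite Rpow_mult_distr. apply Rmult_le_compat_l. apply pow2_ge_0. apply CS_sum. }
      assert (0 < 1 + / eta) by (pose proof (Rinv_0_lt_compat eta Heta); lra).
      apply Rle_trans with ((1 + / eta) * ((delta * Wm) ^ 2 * (INR K * e2 i))).
      apply Rmult_le_compat_l; lra. right. ring. }
  assert (S3 : rsum (fun i => if (i <? m)%nat then 0 else Cmod (T i) ^ 2) R <= Phi ^ 2 * X).
  { destruct (Nat.eq_dec (R + N) 0) as [EQ|NEQ].
    - replace R with 0%nat by lia. simpl. pose proof (pow2_ge_0 Phi). nra.
    - set (Q := (R + N)%nat).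
      apply Rle_trans with (rsum (fun i => if (i <? N)%nat then 0 else Cmod (circ (beta N b) K Q x (i - N)%nat) ^ 2) R).
      + apply rsum_le. intros i Hi. destruct (i <? m)%nat eqn:E1.
        * destruct (i <? N)%nat; [lra|apply pow2_ge_0].
        * apply Nat.ltb_ge in E1. replace (i <? N)%nat with false by (symmetry; apply Nat.ltb_ge; lia).
          right. f_equal. f_equal. unfold T, circ. apply csum_ext. intros q Hq. f_equal. f_equal.
          rewrite Nat.mod_small. lia. unfold Q, K in *. lia.
      + eapply Rle_trans. apply (shiftsum (fun i' => Cmod (circ (beta N b) K Q x i') ^ 2) N R Q).
        intros; apply pow2_ge_0. unfold Q; lia.
        apply circ_bound. unfold Q; lia. auto. }
  assert (S4 : rsum (fun i => if (i <? m)%nat then 0 else e2 i) R <= INR K * X).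
  { apply Rle_trans with (rsum (fun i => rsum (fun q => if (i <? N)%nat then 0 else Cmod (x (q + (i - N))%nat) ^ 2) K) R).
    - apply rsum_le. intros i Hi. destruct (i <? m)%nat eqn:E1.
      + apply rsum_nonneg. intros. destruct (i <? N)%nat; [lra|apply pow2_ge_0].
      + apply Nat.ltb_ge in E1. replace (i <? N)%nat with false by (symmetry; apply Nat.ltb_ge; lia).
        right. unfold e2. apply rsum_ext. intros. do 3 f_equal. lia.
    - rewrite rsum_swap. rewrite <- (rsum_const X). apply rsum_le. intros q Hq.
      eapply Rle_trans. apply (shiftsum (fun i' => Cmod (x (q + i')%nat) ^ 2) N R (R - N)).
      intros; apply pow2_ge_0. lia.
      destruct (le_lt_dec N R) as [HNR|HNR]; [|replace (R - N)%nat with 0%nat by lia; simpl; auto].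
      eapply Rle_trans. 2:{ apply (rsum_mono (fun k => Cmod (x k) ^ 2) (q + (R - N))). intros; apply pow2_ge_0. unfold K in Hq; lia. }
      rewrite rsum_add. pose proof (rsum_nonneg (fun k => Cmod (x k) ^ 2) q (fun _ _ => pow2_ge_0 _)). lra. }
  apply Rle_trans with (rsum (fun i => (1 + eta) * Wm ^ 2 * (if (i <? m)%nat then 0 else Cmod (T i) ^ 2)
       + (1 + / eta) * INR K * delta ^ 2 * Wm ^ 2 * (if (i <? m)%nat then 0 else e2 i)) R).
  - apply rsum_le. intros i Hi. destruct (i <? m)%nat eqn:E1. lra. apply Nat.ltb_ge in E1. apply S1; auto.
  - rewrite rsum_plus, !rsum_scal.
    assert (0 < 1 + / eta) by (pose proof (Rinv_0_lt_compat eta Heta); lra).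
    assert (0 <= INR K) by apply pos_INR.
    assert (0 <= (1 + eta) * Wm ^ 2) by (apply Rmult_le_pos; [lra|apply pow2_ge_0]).
    assert (0 <= (1 + / eta) * INR K * delta ^ 2 * Wm ^ 2).
    { repeat apply Rmult_le_pos; try lra; apply pow2_ge_0. }
    apply Rle_trans with ((1 + eta) * Wm ^ 2 * (Phi ^ 2 * X) + (1 + / eta) * INR K * delta ^ 2 * Wm ^ 2 * (INR K * X)).
    apply Rplus_le_compat; apply Rmult_le_compat_l; auto.
    right. fold K. ring. Qed.


Lemma ip_fin2 x u R0 : (forall i, (R0 <= i)%nat -> Cmult (x i) (Cconj (u i)) = RtoC 0) ->
  ip x u = csum (fun i => Cmult (x i) (Cconj (u i))) R0.
Proof. intros H. unfold ip. apply Ceq.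
  - simpl. rewrite csum_Re. apply ser_fin_Series. intros i Hi. rewrite H by auto. simpl. ring.
  - simpl. rewrite csum_Im. apply ser_fin_Series. intros i Hi. rewrite H by auto. simpl. ring. Qed.

Lemma Cconj0 : Cconj (RtoC 0) = RtoC 0.
Proof. apply Ceq; simpl; lra. Qed.

Lemma UB_sing gamma N b d Phi delta eta A m :
  0 <= gamma -> Hband N d -> bounded_op (band_apply N d) ->
  (forall th, Cmod (psi (beta N b) (2 * N + 1) th) <= Phi) ->
  0 < eta -> 0 <= delta -> (N <= m)%nat -> (2 <= m)%nat ->
  (forall i, (m <= i)%nat -> forall q, (q <= 2 * N)%nat ->
     Cmod (Cminus (d i (i - N + q)%nat) (Cmult (beta N b q) (RtoC (W gamma i)))) <= delta * W gamma i) ->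
  0 <= A -> (1 + eta) * Phi ^ 2 + (1 + / eta) * (INR (2 * N + 1)) ^ 2 * delta ^ 2 <= A ^ 2 ->
  sing_val (band_apply N d) (S m) <= W gamma m * A.
Proof. intros Hg Hb [Mb HMb] HPhi Heta Hdel HNm H2m Hd HA HA2.
  unfold sing_val. apply glb_le. intros M [HM _]; auto.
  assert (HWm := W_pos gamma m).
  split. apply Rmult_le_pos; lra.
  set (u := fun k j => Cconj (d k j)).
  set (v := fun k i => if Nat.eq_dec i k then RtoC 1 else RtoC 0).
  exists u, v. replace (S m - 1)%nat with m by lia. split.
  { intros k Hk. split.
    - apply (l2_fin _ (k + N + 1)). intros j Hj. unfold u. rewrite Hb by lia. apply Cconj0.
    - apply (l2_fin _ (S k)). intros j Hj. unfold v. destruct (Nat.eq_dec j k); [lia|auto]. }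
  intros x Hx. set (Dx := band_apply N d x).
  assert (HK : forall i, fin_rank_apply m u v x i = if (i <? m)%nat then Dx i else RtoC 0).
  { intros i. unfold fin_rank_apply. destruct (i <? m)%nat eqn:E.
    - apply Nat.ltb_lt in E.
      rewrite (csum_ext _ (fun k => if Nat.eq_dec k i then ip x (u k) else RtoC 0)).
      rewrite csum_delta by auto.
      rewrite (ip_fin2 _ _ (i + N + 1)). unfold Dx, band_apply. apply csum_ext. intros j _. unfold u. rewrite Cconj_conj. ring.
      intros j Hj. unfold u. rewrite Hb by lia. rewrite Cconj0, Cconj0. ring.
      intros k Hk. unfold v. destruct (Nat.eq_dec i k); destruct (Nat.eq_dec k i); subst; try lia; ring.
    - apply Nat.ltb_ge in E. apply csum_zero. intros k Hk. unfold v. destruct (Nat.eq_dec i k); [lia|ring]. }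
  assert (HV : forall i, vsub Dx (fin_rank_apply m u v x) i = if (i <? m)%nat then RtoC 0 else Dx i).
  { intros i. unfold vsub. rewrite HK. destruct (i <? m)%nat; ring. }
  destruct (HMb x Hx) as [HDx _].
  assert (Hg2 : forall i, Cmod (vsub Dx (fin_rank_apply m u v x) i) ^ 2 = if (i <? m)%nat then 0 else Cmod (Dx i) ^ 2).
  { intros i. rewrite HV. destruct (i <? m)%nat; auto. rewrite Cmod_0. ring. }
  assert (Hnn : forall i, 0 <= Cmod (vsub Dx (fin_rank_apply m u v x) i) ^ 2) by (intros; apply pow2_ge_0).
  assert (Hx0 : forall i, 0 <= Cmod (x i) ^ 2) by (intros; apply pow2_ge_0).
  assert (Hbound : forall R0, rsum (fun i => Cmod (vsub Dx (fin_rank_apply m u v x) i) ^ 2) R0 <= (W gamma m * A) ^ 2 * Series (fun i => Cmod (x i) ^ 2)).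
  { intros R0. rewrite (rsum_ext _ (fun i => if (i <? m)%nat then 0 else Cmod (band_apply N d x i) ^ 2)) by (intros; apply Hg2).
    eapply Rle_trans. apply (core_UB gamma N b d Phi delta eta m x R0); auto.
    assert (0 <= (1 + eta) * Phi ^ 2 + (1 + / eta) * INR (2 * N + 1) ^ 2 * delta ^ 2).
    { assert (0 < 1 + / eta) by (pose proof (Rinv_0_lt_compat eta Heta); lra).
      assert (0 <= INR (2 * N + 1) ^ 2 * delta ^ 2) by (apply Rmult_le_pos; apply pow2_ge_0).
      pose proof (pow2_ge_0 Phi). nra. }
    apply Rmult_le_compat. apply Rmult_le_pos. apply pow2_ge_0. auto. apply rsum_nonneg; auto.
    rewrite Rpow_mult_distr. apply Rmult_le_compat_l. apply pow2_ge_0. auto.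
    apply ser_ge; auto. }
  destruct (ser_bound _ _ Hnn Hbound) as [Hex Hle].
  split. exact Hex. apply l2norm_le. apply Rmult_le_pos; lra. exact Hle. Qed.


Lemma rsum_block f n P : rsum f (n * P) = rsum (fun l => rsum (fun r => f (l * P + r)%nat) P) n.
Proof. induction n. simpl; auto. rewrite rsum_S, <- IHn. rewrite Nat.mul_succ_l. apply rsum_add. Qed.

Lemma csum_block f n P : csum f (n * P) = csum (fun l => csum (fun r => f (l * P + r)%nat) P) n.
Proof. induction n. simpl; auto. simpl csum at 2. rewrite <- IHn. rewrite Nat.mul_succ_l. apply csum_add. Qed.

Lemma S_nonempty N d n : bounded_op (band_apply N d) ->
  exists M0, 0 <= M0 /\ exists u v : nat -> (nat -> C),
      (forall k, (k < n - 1)%nat -> l2 (u k) /\ l2 (v k)) /\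
      forall x, l2 x ->
        l2 (vsub (band_apply N d x) (fin_rank_apply (n - 1) u v x)) /\
        l2norm (vsub (band_apply N d x) (fin_rank_apply (n - 1) u v x)) <= M0 * l2norm x.
Proof. intros [Mb HMb]. exists (Rmax Mb 0). split. apply Rmax_r.
  exists (fun _ _ => RtoC 0), (fun _ _ => RtoC 0). split.
  intros k _. split; apply (l2_fin _ 0); auto.
  intros x Hx. destruct (HMb x Hx) as [H1 H2].
  assert (E : forall i, vsub (band_apply N d x) (fin_rank_apply (n - 1) (fun _ _ => RtoC 0) (fun _ _ => RtoC 0) x) i = band_apply N d x i).
  { intros i. unfold vsub, fin_rank_apply. rewrite csum_zero. ring. intros; ring. }
  split. eapply ex_series_ext. 2: exact H1. intros i. simpl. rewrite E. auto.
  unfold l2norm in *. rewrite (Series_ext _ (fun i => Cmod (band_apply N d x i) ^ 2)) by (intros; rewrite E; auto).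
  eapply Rle_trans. exact H2. apply Rmult_le_compat_r. apply sqrt_pos. apply Rmax_l. Qed.

Lemma rsum_ge_term f n l0 : (forall i, 0 <= f i) -> (l0 < n)%nat -> f l0 <= rsum f n.
Proof. intros H Hl. replace n with (S l0 + (n - S l0))%nat by lia. rewrite rsum_add, rsum_S.
  pose proof (rsum_nonneg f l0 (fun i _ => H i)). pose proof (rsum_nonneg (fun i => f (S l0 + i)%nat) (n - S l0) (fun i _ => H _)). lra. Qed.

Lemma Cmod_rev a b : Cmod a - Cmod b <= Cmod (Cplus a b).
Proof. pose proof (Cmod_triangle (Cplus a b) (Copp b)). rewrite Cmod_opp in H.
  replace (Cplus (Cplus a b) (Copp b)) with a in H by ring. lra. Qed.

Lemma interior_bound gamma N b d th0 delta P s n (x : nat -> C) (a : nat -> C) l r' :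
  0 <= gamma -> Hband N d -> 0 <= delta -> (2 * N < P)%nat -> (N <= s)%nat -> (2 <= s)%nat ->
  (forall i, (s <= i)%nat -> forall q, (q <= 2 * N)%nat ->
     Cmod (Cminus (d i (i - N + q)%nat) (Cmult (beta N b q) (RtoC (W gamma i)))) <= delta * W gamma i) ->
  (forall l r, (l < n)%nat -> (r < P)%nat -> x (s + (l * P + r))%nat = Cmult (a l) (cexpi (th0 * INR (s + (l * P + r))))) ->
  (l < n)%nat -> (r' < P - 2 * N)%nat ->
  0 <= Cmod (psi (beta N b) (2 * N + 1) th0) - INR (2 * N + 1) * delta ->
  Cmod (a l) * W gamma (s + n * P) * (Cmod (psi (beta N b) (2 * N + 1) th0) - INR (2 * N + 1) * delta)
    <= Cmod (band_apply N d x (s + (l * P + (N + r'))))%nat.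
Proof. intros Hg Hb Hdel HP HNs H2s Hd Hblk Hl Hr Hrho.
  set (i := (s + (l * P + (N + r')))%nat).
  rewrite band_reindex by (auto; unfold i; lia).
  set (Wi := W gamma i).
  assert (HWi : W gamma (s + n * P) <= Wi).
  { apply W_mono; auto. unfold i; lia. unfold i. nia. }
  pose proof (W_pos gamma i) as HWp. fold Wi in HWp.
  set (Sd := csum (fun q => Cmult (d i (i - N + q)%nat) (cexpi (INR q * th0))) (2 * N + 1)).
  replace (csum _ (2 * N + 1)) with (Cmult (Cmult (a l) (cexpi (th0 * INR (i - N)))) Sd).
  2:{ unfold Sd. rewrite <- csum_scal_l. apply csum_ext. intros q Hq.
      replace (i - N + q)%nat with (s + (l * P + (r' + q)))%nat by (unfold i; lia).
      rewrite Hblk by lia. replace (s + (l * P + (r' + q)))%nat with (i - N + q)%nat by (unfold i; lia).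
      rewrite plus_INR. replace (th0 * (INR (i - N) + INR q)) with (th0 * INR (i - N) + INR q * th0) by ring.
      rewrite <- e_add. ring. }
  rewrite !Cmod_mult, Cmod_e, Rmult_1_r.
  rewrite Rmult_assoc. apply Rmult_le_compat_l. apply Cmod_ge_0.
  set (Er := csum (fun q => Cmult (Cminus (d i (i - N + q)%nat) (Cmult (beta N b q) (RtoC Wi))) (cexpi (INR q * th0))) (2 * N + 1)).
  assert (ESd : Sd = Cplus (Cmult (RtoC Wi) (psi (beta N b) (2 * N + 1) th0)) Er).
  { unfold Sd, Er, psi. rewrite <- csum_scal_l, <- csum_plus. apply csum_ext. intros. ring. }
  assert (HEr : Cmod Er <= INR (2 * N + 1) * (delta * Wi)).
  { unfold Er. eapply Rle_trans. apply Cmod_csum. rewrite <- rsum_const. apply rsum_le. intros q Hq.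
    rewrite Cmod_mult, Cmod_e, Rmult_1_r. apply Hd. unfold i; lia. lia. }
  rewrite ESd. eapply Rle_trans. 2: apply Cmod_rev.
  rewrite Cmod_mult, Cmod_R, Rabs_pos_eq by lra.
  set (ps := Cmod (psi (beta N b) (2 * N + 1) th0)) in *.
  apply Rle_trans with (Wi * (ps - INR (2 * N + 1) * delta)). apply Rmult_le_compat_r; auto. lra. Qed.

Lemma LB_sing gamma N b d th0 delta c P s n :
  0 <= gamma -> Hband N d -> bounded_op (band_apply N d) ->
  0 <= delta -> (2 * N < P)%nat -> (N <= s)%nat -> (2 <= s)%nat -> (1 <= n)%nat ->
  (forall i, (s <= i)%nat -> forall q, (q <= 2 * N)%nat ->
     Cmod (Cminus (d i (i - N + q)%nat) (Cmult (beta N b q) (RtoC (W gamma i)))) <= delta * W gamma i) ->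
  0 <= c -> c ^ 2 * INR P <= INR (P - 2 * N) ->
  0 <= Cmod (psi (beta N b) (2 * N + 1) th0) - INR (2 * N + 1) * delta ->
  W gamma (s + n * P) * (Cmod (psi (beta N b) (2 * N + 1) th0) - INR (2 * N + 1) * delta) * c
    <= sing_val (band_apply N d) n.
Proof. intros Hg Hb Hbnd Hdel HP HNs H2s Hn Hd Hc Hc2 Hrho.
  set (rho := Cmod (psi (beta N b) (2 * N + 1) th0) - INR (2 * N + 1) * delta) in *.
  set (Wn := W gamma (s + n * P)).
  assert (HWn : 0 < Wn) by apply W_pos.
  unfold sing_val. destruct (S_nonempty N d n Hbnd) as [M0 HM0]. apply (glb_ge _ M0). exact HM0.
  intros M [HM [u [v [Huv Hall]]]].
  set (Acoef := fun k l => csum (fun r => Cmult (cexpi (th0 * INR (s + (l * P + r)))) (Cconj (u k (s + (l * P + r))%nat))) P).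
  destruct (kernel n (n - 1) Acoef ltac:(lia)) as [a [[l0 [Hl0 Ha0]] Hker]].
  set (x := fun i => if andb (s <=? i)%nat (i <? s + n * P)%nat then Cmult (a ((i - s) / P)%nat) (cexpi (th0 * INR i)) else RtoC 0).
  assert (Hblk : forall l r, (l < n)%nat -> (r < P)%nat -> x (s + (l * P + r))%nat = Cmult (a l) (cexpi (th0 * INR (s + (l * P + r))))).
  { intros l r Hl Hr. unfold x. replace (andb (s <=? s + (l * P + r))%nat (s + (l * P + r) <? s + n * P)%nat) with true.
    2:{ symmetry. apply andb_true_intro. split. apply Nat.leb_le; lia. apply Nat.ltb_lt. nia. }
    replace ((s + (l * P + r) - s) / P)%nat with l; auto.
    replace (s + (l * P + r) - s)%nat with (r + l * P)%nat by lia. rewrite Nat.div_add by lia. rewrite Nat.div_small by lia. lia. }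
  assert (Hout : forall i, (s + n * P <= i)%nat -> x i = RtoC 0).
  { intros i Hi. unfold x. replace (i <? s + n * P)%nat with false by (symmetry; apply Nat.ltb_ge; lia).
    destruct (s <=? i)%nat; auto. }
  assert (Hlow : forall i, (i < s)%nat -> x i = RtoC 0).
  { intros i Hi. unfold x. replace (s <=? i)%nat with false by (symmetry; apply Nat.leb_gt; lia). auto. }
  assert (Hip : forall k, (k < n - 1)%nat -> ip x (u k) = RtoC 0).
  { intros k Hk. rewrite (ip_fin x (u k) (s + n * P)) by auto.
    rewrite csum_add, csum_zero by (intros; rewrite Hlow by auto; ring).
    rewrite csum_block. transitivity (Cplus (RtoC 0) (csum (fun l => Cmult (Acoef k l) (a l)) n)).
    f_equal. apply csum_ext. intros l Hl.
    unfold Acoef. rewrite <- csum_scal_r. apply csum_ext. intros r Hr. rewrite Hblk by auto. ring.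
    rewrite Hker by auto. ring. }
  assert (HK0 : forall i, fin_rank_apply (n - 1) u v x i = RtoC 0).
  { intros i. unfold fin_rank_apply. apply csum_zero. intros k Hk. rewrite Hip by auto. ring. }
  destruct (l2_fin x (s + n * P) Hout) as [Hx2 HSx].
  destruct (Hall x Hx2) as [Hl2 Hnorm].
  set (Dx := band_apply N d x) in *.
  assert (Hvs : forall i, vsub Dx (fin_rank_apply (n - 1) u v x) i = Dx i).
  { intros i. unfold vsub. rewrite HK0. ring. }
  assert (Hnn : forall i, 0 <= Cmod (vsub Dx (fin_rank_apply (n - 1) u v x) i) ^ 2) by (intros; apply pow2_ge_0).
  set (SA := rsum (fun l => Cmod (a l) ^ 2) n).
  assert (HSA : 0 < SA).
  { eapply Rlt_le_trans. 2: apply (rsum_ge_term (fun l => Cmod (a l) ^ 2) n l0); auto.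
    apply pow_lt. apply Cmod_gt_0. auto. intros; apply pow2_ge_0. }
  assert (ESx : Series (fun i => Cmod (x i) ^ 2) = INR P * SA).
  { rewrite HSx, rsum_add, (rsum_ext (fun i => Cmod (x i) ^ 2) (fun _ => 0)), rsum_const, Rmult_0_r, Rplus_0_l.
    rewrite rsum_block. unfold SA. rewrite <- rsum_scal. apply rsum_ext. intros l Hl.
    rewrite (rsum_ext _ (fun _ => Cmod (a l) ^ 2)). rewrite rsum_const. ring.
    intros r Hr. rewrite Hblk by auto. rewrite Cmod_mult, Cmod_e. ring.
    intros i Hi. rewrite Hlow by auto. rewrite Cmod_0. ring. }
  assert (ESD : INR (P - 2 * N) * Wn ^ 2 * rho ^ 2 * SA <= Series (fun i => Cmod (vsub Dx (fin_rank_apply (n - 1) u v x) i) ^ 2)).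
  { eapply Rle_trans. 2: apply (ser_ge _ (s + n * P)); auto.
    rewrite (rsum_ext _ (fun i => Cmod (Dx i) ^ 2)) by (intros; rewrite Hvs; auto).
    rewrite rsum_add. eapply Rle_trans. 2:{ apply Rplus_le_compat_r. apply rsum_nonneg. intros; apply pow2_ge_0. }
    rewrite Rplus_0_l, rsum_block. unfold SA. rewrite <- rsum_scal. apply rsum_le. intros l Hl.
    eapply Rle_trans. 2:{ apply (rsum_mono (fun r => Cmod (Dx (s + (l * P + r))%nat) ^ 2) (N + (P - 2 * N))). intros; apply pow2_ge_0. lia. }
    rewrite rsum_add. eapply Rle_trans. 2:{ apply Rplus_le_compat_r. apply rsum_nonneg. intros; apply pow2_ge_0. }
    rewrite Rplus_0_l. replace (INR (P - 2 * N) * Wn ^ 2 * rho ^ 2 * Cmod (a l) ^ 2) with (INR (P - 2 * N) * (Wn ^ 2 * rho ^ 2 * Cmod (a l) ^ 2)) by ring.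
    rewrite <- rsum_const. apply rsum_le. intros r' Hr'.
    assert (X := interior_bound gamma N b d th0 delta P s n x a l r' Hg Hb Hdel HP HNs H2s Hd Hblk Hl Hr' Hrho).
    fold rho in X. fold Wn in X. fold Dx in X.
    assert (0 <= Cmod (a l) * Wn * rho) by (apply Rmult_le_pos; [apply Rmult_le_pos; [apply Cmod_ge_0|lra]|auto]).
    apply Rle_trans with ((Cmod (a l) * Wn * rho) ^ 2). right. ring.
    apply pow_incr. split; auto. }
  unfold l2norm in Hnorm. rewrite ESx in Hnorm.
  assert (HPr : 0 < INR P) by (apply lt_0_INR; lia).
  assert (Hk : 0 <= Wn * rho * c) by (apply Rmult_le_pos; [apply Rmult_le_pos|]; lra).
  assert (Hsq : Wn * rho * c * sqrt (INR P * SA) <= M * sqrt (INR P * SA)).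
  { eapply Rle_trans. 2: exact Hnorm. rewrite <- (sqrt_pow2 (Wn * rho * c)) by auto. rewrite <- sqrt_mult.
    apply sqrt_le_1_alt. eapply Rle_trans. 2: exact ESD.
    replace ((Wn * rho * c) ^ 2 * (INR P * SA)) with ((c ^ 2 * INR P) * (Wn ^ 2 * rho ^ 2 * SA)) by ring.
    replace (INR (P - 2 * N) * Wn ^ 2 * rho ^ 2 * SA) with (INR (P - 2 * N) * (Wn ^ 2 * rho ^ 2 * SA)) by ring.
    apply Rmult_le_compat_r; auto. apply Rmult_le_pos. apply Rmult_le_pos; apply pow2_ge_0. lra.
    apply pow2_ge_0. apply Rmult_le_pos; lra. }
  assert (0 < sqrt (INR P * SA)) by (apply sqrt_lt_R0; apply Rmult_lt_0_compat; auto).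
  apply (Rmult_le_reg_r (sqrt (INR P * SA))); auto. Qed.


Lemma INR_unb r : exists n : nat, r < INR n.
Proof. destruct (archimed (Rabs r)) as [H1 _].
  assert (0 < IZR (up (Rabs r))) by (pose proof (Rabs_pos r); lra).
  apply lt_0_IZR in H. exists (Z.to_nat (up (Rabs r))).
  rewrite INR_IZR_INZ, Z2Nat.id by lia. pose proof (Rle_abs r). lra. Qed.

Lemma ln_inf k B : eventually (fun n => B <= ln (INR (n - k))).
Proof. destruct (INR_unb (exp B)) as [N0 HN0]. exists (N0 + k)%nat. intros n Hn.
  rewrite <- (ln_exp B). apply ln_le. apply exp_pos. eapply Rlt_le, Rlt_le_trans. exact HN0. apply le_INR. lia. Qed.

Lemma ratio_gen gamma xi a (p q : nat -> R) : 0 < gamma -> 0 < xi ->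
  eventually (fun n => 1 < p n) -> (forall B, eventually (fun n => B <= ln (q n))) ->
  eventually (fun n => ln (p n) <= ln (q n) + a) ->
  eventually (fun n => Rpower (ln (p n)) gamma <= (1 + xi) * Rpower (ln (q n)) gamma).
Proof. intros Hg Hxi Hp Hq Hpq.
  set (lam := Rpower (1 + xi) (/ gamma)).
  assert (Hlam : 1 < lam).
  { unfold lam. pose proof (Rpower_lt (1 + xi) 0 (/ gamma) ltac:(lra) (Rinv_0_lt_compat _ Hg)) as X.
    rewrite Rpower_O in X by lra. exact X. }
  assert (Hlg : Rpower lam gamma = 1 + xi).
  { unfold lam. rewrite Rpower_mult. rewrite Rinv_l by lra. apply Rpower_1. lra. }
  destruct (Hq (Rmax 1 (a / (lam - 1)))) as [N1 HN1].
  destruct Hp as [N2 HN2]. destruct Hpq as [N3 HN3].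
  exists (Nat.max N1 (Nat.max N2 N3)). intros n Hn.
  specialize (HN1 n ltac:(lia)). specialize (HN2 n ltac:(lia)). specialize (HN3 n ltac:(lia)).
  set (Lq := ln (q n)) in *.
  assert (HLq1 : 1 <= Lq) by (eapply Rle_trans; [apply Rmax_l|exact HN1]).
  assert (HLa : a / (lam - 1) <= Lq) by (eapply Rle_trans; [apply Rmax_r|exact HN1]).
  assert (Ha : a <= (lam - 1) * Lq).
  { apply Rmult_le_compat_l with (r := lam - 1) in HLa; [|lra].
    replace ((lam - 1) * (a / (lam - 1))) with a in HLa by (field; lra). lra. }
  assert (Hlp : 0 < ln (p n)) by (rewrite <- ln_1; apply ln_increasing; lra).
  eapply Rle_trans. apply Rle_Rpower_l. lra. split. exact Hlp.
  instantiate (1 := lam * Lq). nra.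
  rewrite <- Rpower_mult_distr by lra. rewrite Hlg. lra. Qed.

Lemma param_UB Phi e K : 0 <= Phi -> 0 < e -> 1 <= K ->
  let eta := e / (4 * (Phi + 1)) in
  let delta := e * eta / (2 * K * (1 + eta)) in
  (1 + eta) * Phi ^ 2 + (1 + / eta) * K ^ 2 * delta ^ 2 <= (Phi + e / 2) ^ 2.
Proof. intros HP He HK eta delta.
  assert (Heta : 0 < eta) by (unfold eta; apply Rdiv_lt_0_compat; lra).
  assert (E1 : (1 + / eta) * K ^ 2 * delta ^ 2 = e ^ 2 * eta / (4 * (1 + eta))).
  { unfold delta. field. lra. }
  assert (E2 : eta * Phi ^ 2 <= e * Phi / 4).
  { unfold eta. apply (Rmult_le_reg_r (4 * (Phi + 1))). lra.
    replace (e / (4 * (Phi + 1)) * Phi ^ 2 * (4 * (Phi + 1))) with (e * Phi ^ 2) by (field; lra).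
    replace (e * Phi / 4 * (4 * (Phi + 1))) with (e * Phi ^ 2 + e * Phi) by (field; lra). nra. }
  assert (E3 : e ^ 2 * eta / (4 * (1 + eta)) <= e ^ 2 / 4).
  { apply (Rmult_le_reg_r (4 * (1 + eta))). lra.
    replace (e ^ 2 * eta / (4 * (1 + eta)) * (4 * (1 + eta))) with (e ^ 2 * eta) by (field; lra).
    replace (e ^ 2 / 4 * (4 * (1 + eta))) with (e ^ 2 + e ^ 2 * eta) by (field; lra). nra. }
  rewrite E1. nra. Qed.

Lemma Rpower_W g n : Rpower (ln (INR n)) g * W g n = 1.
Proof. unfold W. field. apply Rgt_not_eq, Rpower_pos. Qed.

Theorem corollary4p4 (gamma : R) (N : nat) (b : Z -> C) (d : nat -> nat -> C) :
  0 < gamma ->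
  (forall i j : nat, (i + N < j)%nat \/ (j + N < i)%nat -> d i j = RtoC 0) ->
  compact_op (band_apply N d) ->
  (forall j : Z, (- Z.of_nat N <= j <= Z.of_nat N)%Z ->
     exists eps : nat -> C,
       is_lim_seq (fun m => Cmod (eps m)) 0 /\
       exists m0 : nat, forall m : nat, (m0 <= m)%nat ->
         d m (Z.to_nat (Z.of_nat m + j)) =
         Cmult (Cdiv (b j) (RtoC (Rpower (ln (INR m)) gamma)))
               (Cplus (RtoC 1) (eps m))) ->
  is_lim_seq (fun n => Rpower (ln (INR n)) gamma * sing_val (band_apply N d) n)
             (symbol_sup_norm N b).
Proof. intros Hg Hb Hcomp Has.
  assert (Hb' : Hband N d) by exact Hb.
  assert (Has' : Hasym gamma N b d) by exact Has.
  destruct Hcomp as [Hbnd _].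
  destruct (Phi_facts N b) as [HP1 HP2].
  set (Phi := symbol_sup_norm N b) in *.
  assert (HPhi0 : 0 <= Phi) by (eapply Rle_trans; [apply Cmod_ge_0|apply (HP1 0)]).
  set (K := INR (2 * N + 1)).
  assert (HK : 1 <= K) by (unfold K; apply (le_INR 1); lia).
  assert (Hsv0 : forall n, 0 <= sing_val (band_apply N d) n).
  { intros n. unfold sing_val. destruct (S_nonempty N d n Hbnd) as [M0 HM0].
    apply (glb_le _ M0). intros M [HM _]; auto. exact HM0. }
  set (f := fun n => Rpower (ln (INR n)) gamma * sing_val (band_apply N d) n).
  assert (Hf0 : forall n, 0 <= f n) by (intros; apply Rmult_le_pos; [apply Rlt_le, Rpower_pos|auto]).
  apply is_lim_seq_spec. intros eps. set (e := eps / 2).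
  assert (He : 0 < e) by (unfold e; destruct eps; simpl; lra).
  assert (EU : eventually (fun n => f n <= Phi + e)).
  { set (A := Phi + e / 2).
    set (eta := e / (4 * (Phi + 1))).
    set (delta := e * eta / (2 * K * (1 + eta))).
    assert (Heta : 0 < eta) by (unfold eta; apply Rdiv_lt_0_compat; lra).
    assert (Hdel : 0 < delta) by (unfold delta; apply Rdiv_lt_0_compat; [apply Rmult_lt_0_compat|]; nra).
    assert (HA2 := param_UB Phi e K HPhi0 He HK). simpl in HA2. fold eta delta A in HA2.
    destruct (Hd_unif gamma N b d Has' delta Hdel) as [M0 HM0].
    set (xi := (e / 2) / A).
    assert (HA : 0 < A) by (unfold A; lra).
    assert (Hxi : 0 < xi) by (unfold xi; apply Rdiv_lt_0_compat; lra).
    destruct (ratio_gen gamma xi (ln 2) (fun n => INR n) (fun n => INR (n - 1)) Hg Hxi) as [N1 HN1].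
    - exists 2%nat. intros n Hn. apply (lt_INR 1 n). lia.
    - intros B. apply ln_inf.
    - exists 2%nat. intros n Hn. rewrite <- ln_mult. apply ln_le. apply (lt_INR 0); lia.
      rewrite minus_INR by lia. assert (2 <= INR n) by (apply (le_INR 2); lia). simpl. lra.
      rewrite minus_INR by lia. assert (2 <= INR n) by (apply (le_INR 2); lia). simpl. lra. lra.
    - exists (Nat.max N1 (Nat.max (S M0) (Nat.max (S N) 3))). intros n Hn.
      specialize (HN1 n ltac:(lia)). simpl in HN1.
      destruct n as [|m]; [lia|].
      assert (Hs : sing_val (band_apply N d) (S m) <= W gamma m * A).
      { apply (UB_sing gamma N b d Phi delta eta A m); try lia; auto; try lra.
        intros i Hi q Hq. apply HM0; lia. }
      unfold f. replace (S m - 1)%nat with m in HN1 by lia.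
      assert (HR := Rpower_pos (ln (INR (S m))) gamma).
      eapply Rle_trans. apply Rmult_le_compat_l. lra. exact Hs.
      eapply Rle_trans. rewrite <- Rmult_assoc. apply Rmult_le_compat_r. lra.
      apply Rmult_le_compat_r. apply Rlt_le, W_pos. exact HN1.
      rewrite (Rmult_assoc (1 + xi)), Rpower_W, Rmult_1_r. unfold xi. right. field_simplify; [|lra]. unfold A. field. }
  assert (EL : eventually (fun n => Phi - e <= f n)).
  { destruct (HP2 (e / 4) ltac:(lra)) as [th0 Hth0].
    set (delta := e / (4 * K)).
    assert (Hdel : 0 < delta) by (unfold delta; apply Rdiv_lt_0_compat; lra).
    set (rho := Cmod (psi (beta N b) (2 * N + 1) th0) - K * delta).
    assert (Hrho : Phi - e / 2 < rho) by (unfold rho, delta; field_simplify; [|lra]; lra).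
    destruct (Rlt_le_dec rho 0) as [Hneg|Hpos].
    { exists 0%nat. intros n _. pose proof (Hf0 n). lra. }
    set (nu := e / (2 * (rho + 1))).
    set (xi := nu / 2).
    set (c := 1 / (1 + xi)).
    assert (Hnu : 0 < nu) by (unfold nu; apply Rdiv_lt_0_compat; lra).
    assert (Hxi : 0 < xi) by (unfold xi; lra).
    assert (Hc : 0 < c < 1).
    { unfold c. split. apply Rdiv_lt_0_compat; lra. apply (Rmult_lt_reg_r (1 + xi)). lra.
      replace (1 / (1 + xi) * (1 + xi)) with 1 by (field; lra). lra. }
    assert (Hc2 : 0 < 1 - c ^ 2) by nra.
    destruct (INR_unb (2 * INR N / (1 - c ^ 2) + 2 * INR N)) as [P HP].
    assert (HPN : (2 * N < P)%nat).
    { apply INR_lt. rewrite mult_INR. simpl. assert (0 <= 2 * INR N / (1 - c ^ 2)).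
      apply Rdiv_le_0_compat; [pose proof (pos_INR N); lra|lra]. lra. }
    assert (HcP : c ^ 2 * INR P <= INR (P - 2 * N)).
    { rewrite minus_INR by lia. rewrite mult_INR. simpl.
      assert (2 * INR N / (1 - c ^ 2) < INR P) by (pose proof (pos_INR N); lra).
      apply (Rmult_lt_compat_r (1 - c ^ 2)) in H; auto.
      replace (2 * INR N / (1 - c ^ 2) * (1 - c ^ 2)) with (2 * INR N) in H by (field; lra). simpl in H. lra. }
    destruct (Hd_unif gamma N b d Has' delta Hdel) as [M0 HM0].
    set (s := Nat.max M0 (Nat.max N 2)).
    destruct (ratio_gen gamma xi (ln (INR (s + P))) (fun n => INR (s + n * P)) (fun n => INR n) Hg Hxi) as [N1 HN1].
    - exists 0%nat. intros n _. apply (lt_INR 1). unfold s. lia.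
    - intros B. destruct (ln_inf 0 B) as [N2 HN2]. exists N2. intros n Hn. specialize (HN2 n Hn).
      rewrite Nat.sub_0_r in HN2. auto.
    - exists 1%nat. intros n Hn. rewrite Rplus_comm, <- ln_mult. apply ln_le. apply (lt_INR 0); unfold s; lia.
      rewrite <- mult_INR. apply le_INR. unfold s in *. nia.
      apply (lt_INR 0); unfold s; lia. apply (lt_INR 0); lia.
    - exists (Nat.max N1 1). intros n Hn. specialize (HN1 n ltac:(lia)). simpl in HN1.
      assert (Hs := LB_sing gamma N b d th0 delta c P s n (Rlt_le _ _ Hg) Hb' Hbnd (Rlt_le _ _ Hdel) HPN
                  ltac:(unfold s; lia) ltac:(unfold s; lia) ltac:(lia)
                  ltac:(intros i Hi q Hq; apply HM0; unfold s in Hi; lia) (Rlt_le _ _ (proj1 Hc)) HcP Hpos).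
      fold K in Hs. fold rho in Hs.
      set (Wn := W gamma (s + n * P)) in *.
      set (Rn := Rpower (ln (INR n)) gamma).
      assert (HRn : 0 < Rn) by apply Rpower_pos.
      assert (Hratio : 1 / (1 + xi) <= Rn * Wn).
      { unfold Wn, W. assert (HR2 := Rpower_pos (ln (INR (s + n * P))) gamma).
        apply (Rmult_le_reg_r ((1 + xi) * Rpower (ln (INR (s + n * P))) gamma)). nra.
        replace (1 / (1 + xi) * ((1 + xi) * Rpower (ln (INR (s + n * P))) gamma)) with (Rpower (ln (INR (s + n * P))) gamma) by (field; lra).
        replace (Rn * / Rpower (ln (INR (s + n * P))) gamma * ((1 + xi) * Rpower (ln (INR (s + n * P))) gamma)) with ((1 + xi) * Rn) by (field; lra).
        exact HN1. }
      unfold f. fold Rn.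
      assert (Hf : Rn * Wn * rho * c <= Rn * sing_val (band_apply N d) n).
      { replace (Rn * Wn * rho * c) with (Rn * (Wn * rho * c)) by ring. apply Rmult_le_compat_l; lra. }
      assert (Hlow : 1 / (1 + xi) * rho * c <= Rn * Wn * rho * c).
      { apply Rmult_le_compat_r. lra. apply Rmult_le_compat_r; lra. }
      assert (Hfin : rho - e / 2 <= 1 / (1 + xi) * rho * c).
      { unfold c. replace (1 / (1 + xi) * rho * (1 / (1 + xi))) with (rho / (1 + xi) ^ 2) by (field; lra).
        apply (Rmult_le_reg_r ((1 + xi) ^ 2)). nra.
        replace (rho / (1 + xi) ^ 2 * (1 + xi) ^ 2) with rho by (field; lra).
        assert (rho * nu <= e / 2).
        { unfold nu. apply (Rmult_le_reg_r (2 * (rho + 1))). lra.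
          replace (rho * (e / (2 * (rho + 1))) * (2 * (rho + 1))) with (rho * e) by (field; lra). nra. }
        assert ((rho - e / 2) <= rho * (1 - nu)) by nra.
        assert ((1 - nu) * (1 + xi) ^ 2 <= 1).
        { replace nu with (2 * xi) by (unfold xi; field). nra. }
        assert (rho - e / 2 <= 0 \/ 0 < rho - e / 2) as [Hq|Hq] by lra.
        - assert (0 <= rho * (1 + xi) ^ 2) by (apply Rmult_le_pos; [lra|apply pow2_ge_0]). nra.
        - nra. }
      lra. }
  destruct EU as [Nu HNu]. destruct EL as [Nl HNl]. exists (Nat.max Nu Nl). intros n Hn.
  specialize (HNu n ltac:(lia)). specialize (HNl n ltac:(lia)). fold f.
  apply Rabs_lt_between'. unfold e in *. destruct eps; simpl in *. lra. Qed.
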